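(* Assume the general single-user setting below, with $T=\tau_n+D_n$. Define $V^l(0)=0$, $$V^l(\tau)=\max_{e\in\mathcal E,\,e>0}\frac{1-[1-\zeta(i^{\min},e)]^{\tau}}{\zeta(i^{\min},e)}\big[-\lambda e+\zeta(i^{\min},e)\beta\big],\quad \tau\ge1,$$ and $V^u(0)=0$, $$V^u(\tau)=\sum_{z=1}^{\tau}\max_{e\in\mathcal E}\Big\{-\lambda e+\zeta(i^{\max},e)\big(\beta-\max\{0,V^l(z-1)\}\big)\Big\},\quad\tau\ge1.$$ Then for every state $i$ and every $1\le\tau\le T$, $$\max\{0,V^l(\tau)\}\le V(0,\tau,i)\le\min\{\beta,V^u(\tau)\}.$$
   Context: General single-user setting (perfect prediction): fix $\beta\ge0$, $\lambda\ge0$ and integers $\tau_n\ge1$, $D_n\ge0$. The channel is a finite-state Markov chain on $\{1,\dots,K\}$ with transition matrix $(P^{i,j})$. $\mathcal E\subset[0,\infty)$ is a finite set of resource levels containing $0$ and at least one positive element. For each state $i$, $\zeta(i,\cdot):\mathcal E\to[0,1]$ with $\zeta(i,0)=0$, $\zeta(i,e)>0$ for $e>0$, and $\zeta(i,\cdot)$ strictly increasing (restriction of a concave strictly increasing function). The states are totally ordered by $\zeta$: for every $i,j$, either $\zeta(i,e)\ge\zeta(j,e)$ for all $e\in\mathcal E$ or $\zeta(i,e)\le\zeta(j,e)$ for all $e\in\mathcal E$; $i^{\max}$ is a state with $\zeta(i^{\max},e)\ge\zeta(i,e)$ for all $i,e$, and $i^{\min}$ a state with $\zeta(i^{\min},e)\le\zeta(i,e)$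 for all $i,e$. The value function is $V(0,0,i)=0$ and, for $1\le\tau\le\tau_n+D_n$, $V(0,\tau,i)=\max_{e\in\mathcal E}\{-\lambda e+\zeta(i,e)\beta+(1-\zeta(i,e))\sum_jP^{i,j}V(0,\tau-1,j)\}$. *)

(* Defs.v *)
From Stdlib Require Import Reals List.
Import ListNotations.
Open Scope R_scope.

(* Maximum of f over a list; the value on the empty list (0) is irrelevant
   since it is only applied to lists shown non-empty by hypothesis. *)
Definition lmax (f : R -> R) (l : list R) : R :=
  match l with
  | [] => 0
  | x :: xs => fold_right (fun e acc => Rmax (f e) acc) (f x) xs
  end.

Definition rsum (K : nat) (f : nat -> R) : R :=
  fold_right Rplus 0 (map f (seq 0 K)).

Definition pos_part (E : list R) : list R :=
  filter (fun e => if Rlt_dec 0 e then true else false) E.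

(* Value function V(0,tau,i); states are 0..K-1. *)
Fixpoint Vval (K : nat) (P : nat -> nat -> R) (E : list R)
    (zeta : nat -> R -> R) (beta lambda : R) (tau : nat) (i : nat) : R :=
  match tau with
  | O => 0
  | S t => lmax (fun e => - lambda * e + zeta i e * beta
                   + (1 - zeta i e) *
                     rsum K (fun j => P i j * Vval K P E zeta beta lambda t j)) E
  end.

Definition Vl (E : list R) (zeta : nat -> R -> R) (imin : nat)
    (beta lambda : R) (tau : nat) : R :=
  match tau with
  | O => 0
  | S _ => lmax (fun e => (1 - (1 - zeta imin e) ^ tau) / zeta imin e
                         * (- lambda * e + zeta imin e * beta)) (pos_part E)
  end.

Definition Vu (E : list R) (zeta : nat -> R -> R) (imin imax : nat)
    (beta lambda : R) (tau : nat) : R :=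
  fold_right Rplus 0
    (map (fun z => lmax (fun e => - lambda * e + zeta imax e *
                          (beta - Rmax 0 (Vl E zeta imin beta lambda (z - 1)))) E)
         (seq 1 tau)).

Definition concave_nonneg (g : R -> R) : Prop :=
  forall x y t, 0 <= x -> 0 <= y -> 0 <= t <= 1 ->
    t * g x + (1 - t) * g y <= g (t * x + (1 - t) * y).

Definition strict_incr_nonneg (g : R -> R) : Prop :=
  forall x y, 0 <= x -> x < y -> g x < g y.

(* Main.v *)
Require Import Defs.
From Stdlib Require Import Reals List Lra Lia Psatz.
Import ListNotations.
Open Scope R_scope.

Lemma fr_ge (f : R -> R) xs a : a <= fold_right (fun e acc => Rmax (f e) acc) a xs /\
  forall y, In y xs -> f y <= fold_right (fun e acc => Rmax (f e) acc) a xs.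
Proof.
  induction xs as [|x xs IH]; simpl.
  - split; [lra | tauto].
  - destruct IH as [H1 H2]. split.
    + eapply Rle_trans; [exact H1|apply Rmax_r].
    + intros y [<-|Hy]; [apply Rmax_l|]. eapply Rle_trans; [apply H2; exact Hy|apply Rmax_r].
Qed.

Lemma fr_le (f : R -> R) xs a b : a <= b -> (forall y, In y xs -> f y <= b) ->
  fold_right (fun e acc => Rmax (f e) acc) a xs <= b.
Proof.
  induction xs as [|x xs IH]; simpl; intros Ha Hy; auto.
  apply Rmax_lub; auto.
Qed.

Lemma fr_in (f : R -> R) xs a : fold_right (fun e acc => Rmax (f e) acc) a xs = a \/
  exists y, In y xs /\ fold_right (fun e acc => Rmax (f e) acc) a xs = f y.
Proof.
  induction xs as [|x xs IH]; simpl; [auto|].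
  set (acc := fold_right (fun e acc => Rmax (f e) acc) a xs) in *.
  unfold Rmax. destruct (Rle_dec (f x) acc).
  - destruct IH as [H|[y [Hy H]]]; [left; exact H | right; exists y; split; [right; exact Hy|exact H]].
  - right; exists x; split; [left; reflexivity|reflexivity].
Qed.

Lemma lmax_ge f l x : In x l -> f x <= lmax f l.
Proof.
  destruct l as [|y ys]; simpl; [tauto|]. intros [<-|H]; [apply (proj1 (fr_ge f ys (f y))) | apply (proj2 (fr_ge f ys (f y))); exact H].
Qed.

Lemma lmax_le f l b : l <> [] -> (forall x, In x l -> f x <= b) -> lmax f l <= b.
Proof.
  destruct l as [|y ys]; simpl; [tauto|]. intros _ H. apply fr_le; auto.
Qed.

Lemma lmax_in f l : l <> [] -> exists x, In x l /\ lmax f l = f x.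
Proof.
  destruct l as [|y ys]; simpl; [tauto|]. intros _.
  destruct (fr_in f ys (f y)) as [H|[z [Hz H]]].
  - exists y; auto.
  - exists z; auto.
Qed.

Lemma fr_plus a l : fold_right Rplus a l = fold_right Rplus 0 l + a.
Proof. induction l; simpl; [lra|rewrite IHl; lra]. Qed.

Lemma rsum_S K f : rsum (S K) f = rsum K f + f K.
Proof.
  unfold rsum. rewrite seq_S, map_app, fold_right_app. simpl.
  rewrite fr_plus. lra.
Qed.

Lemma rsum_le K f g : (forall j, (j < K)%nat -> f j <= g j) -> rsum K f <= rsum K g.
Proof.
  induction K; intros H; [unfold rsum; simpl; lra|].
  rewrite !rsum_S. assert (f K <= g K) by (apply H; lia).
  assert (rsum K f <= rsum K g) by (apply IHK; intros; apply H; lia). lra.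
Qed.

Lemma rsum_scal K f c : rsum K (fun j => f j * c) = rsum K f * c.
Proof.
  induction K; [unfold rsum; simpl; lra|]. rewrite !rsum_S, IHK. lra.
Qed.

Lemma pow01 q t : 0 <= q <= 1 -> 0 <= q ^ t <= 1.
Proof. intros H; induction t; simpl; nra. Qed.

Theorem theorem7
  (beta lambda : R) (tau_n D_n : nat) (K : nat)
  (P : nat -> nat -> R) (E : list R) (zeta : nat -> R -> R) (imax imin : nat)
  (Hbeta : 0 <= beta) (Hlambda : 0 <= lambda) (Htau_n : (1 <= tau_n)%nat)
  (HK : (1 <= K)%nat)
  (HPnn : forall i j, (i < K)%nat -> (j < K)%nat -> 0 <= P i j)
  (HPsum : forall i, (i < K)%nat -> rsum K (fun j => P i j) = 1)
  (HEnd : NoDup E)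
  (HEnn : forall e, In e E -> 0 <= e)
  (HE0 : In 0 E)
  (HEpos : exists e, In e E /\ 0 < e)
  (Hz01 : forall i e, (i < K)%nat -> In e E -> 0 <= zeta i e <= 1)
  (Hz0 : forall i, (i < K)%nat -> zeta i 0 = 0)
  (Hzpos : forall i e, (i < K)%nat -> In e E -> 0 < e -> 0 < zeta i e)
  (Hzconc : forall i, (i < K)%nat -> exists g : R -> R,
      concave_nonneg g /\ strict_incr_nonneg g /\
      forall e, In e E -> zeta i e = g e)
  (Hord : forall i j, (i < K)%nat -> (j < K)%nat ->
      (forall e, In e E -> zeta j e <= zeta i e) \/
      (forall e, In e E -> zeta i e <= zeta j e))
  (Himax : (imax < K)%nat)
  (Himax_ge : forall i e, (i < K)%nat -> In e E -> zeta i e <= zeta imax e)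
  (Himin : (imin < K)%nat)
  (Himin_le : forall i e, (i < K)%nat -> In e E -> zeta imin e <= zeta i e) :
  forall i tau, (i < K)%nat -> (1 <= tau <= tau_n + D_n)%nat ->
    Rmax 0 (Vl E zeta imin beta lambda tau)
      <= Vval K P E zeta beta lambda tau i
      <= Rmin beta (Vu E zeta imin imax beta lambda tau).
Proof.
  set (V := Vval K P E zeta beta lambda).
  assert (HEne : E <> []) by (intro H; rewrite H in HE0; inversion HE0).
  assert (Havg : forall i t lo hi, (i < K)%nat ->
            (forall j, (j < K)%nat -> lo <= V t j <= hi) ->
            lo <= rsum K (fun j => P i j * V t j) <= hi).
  { intros i t lo hi Hi Hb. split.
    - replace lo with (rsum K (fun j => P i j * lo))
        by (rewrite rsum_scal, HPsum by exact Hi; lra).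
      apply rsum_le; intros j Hj. specialize (Hb j Hj). specialize (HPnn i j Hi Hj). nra.
    - replace hi with (rsum K (fun j => P i j * hi))
        by (rewrite rsum_scal, HPsum by exact Hi; lra).
      apply rsum_le; intros j Hj. specialize (Hb j Hj). specialize (HPnn i j Hi Hj). nra. }
  assert (VS : forall t i, V (S t) i = lmax (fun e => - lambda * e + zeta i e * beta
                   + (1 - zeta i e) * rsum K (fun j => P i j * V t j)) E) by reflexivity.
  assert (Ha : forall t i, (i < K)%nat -> 0 <= V t i <= beta).
  { induction t; intros i Hi; [unfold V; simpl; lra|].
    assert (HA := Havg i t 0 beta Hi IHt).
    rewrite VS. split.
    - eapply Rle_trans; [|apply (lmax_ge _ _ 0 HE0)]. cbv beta. rewrite (Hz0 i Hi). lra.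
    - apply lmax_le; auto. intros e He. specialize (Hz01 i e Hi He). specialize (HEnn e He).
      nra. }
  (* (b) lower bound by fixed-e policy *)
  assert (Hb : forall e, In e E -> 0 < e -> forall t i, (i < K)%nat ->
     (1 - (1 - zeta imin e) ^ t) / zeta imin e * (- lambda * e + zeta imin e * beta)
       <= V t i).
  { intros e He He0. set (z := zeta imin e). set (c := - lambda * e + z * beta).
    assert (Hz : 0 < z) by (apply Hzpos; auto).
    assert (Hz1 : z <= 1) by (apply Hz01; auto).
    assert (HWb : forall t, (1 - (1 - z) ^ t) / z * c <= beta).
    { intros t. assert (Hq := pow01 (1 - z) t ltac:(lra)).
      replace ((1 - (1 - z) ^ t) / z * c) with ((1 - (1 - z) ^ t) * (beta - lambda * e / z))
        by (unfold c; field; lra).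
      assert (0 <= lambda * e / z) by (apply Rmult_le_pos; [apply Rmult_le_pos; auto|
        left; apply Rinv_0_lt_compat; auto]).
      nra. }
    induction t; intros i Hi.
    - unfold V; simpl. replace ((1 - 1) / z * c) with 0 by (field; lra). lra.
    - rewrite VS. eapply Rle_trans; [|apply (lmax_ge _ _ e He)].
      assert (HA := Havg i t ((1 - (1 - z) ^ t) / z * c) beta Hi
                     (fun j Hj => conj (IHt j Hj) (proj2 (Ha t j Hj)))).
      assert (Hzi := Hz01 i e Hi He). assert (Hzz := Himin_le i e Hi He).
      fold z in Hzz. specialize (HWb t).
      set (W := (1 - (1 - z) ^ t) / z * c) in *.
      replace ((1 - (1 - z) ^ S t) / z * c) with (- lambda * e + z * beta + (1 - z) * W)
        by (unfold W, c; simpl; field; lra).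
      nra. }
  assert (HVl : forall t i, (i < K)%nat -> Vl E zeta imin beta lambda t <= V t i).
  { intros [|t] i Hi; [unfold V; simpl; lra|].
    unfold Vl.
    assert (Hpne : pos_part E <> []).
    { destruct HEpos as [e [He He0]]. intro Hn.
      assert (In e (pos_part E)) by (unfold pos_part; apply filter_In; split; auto;
        destruct (Rlt_dec 0 e); auto; lra).
      rewrite Hn in H; inversion H. }
    destruct (lmax_in (fun e => (1 - (1 - zeta imin e) ^ S t) / zeta imin e
                         * (- lambda * e + zeta imin e * beta)) _ Hpne) as [e [He Heq]].
    rewrite Heq. unfold pos_part in He. apply filter_In in He as [He He0].
    destruct (Rlt_dec 0 e); [|discriminate]. apply Hb; auto. }
  assert (VuS : forall t, Vu E zeta imin imax beta lambda (S t) =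
     Vu E zeta imin imax beta lambda t + lmax (fun e => - lambda * e + zeta imax e *
                          (beta - Rmax 0 (Vl E zeta imin beta lambda t))) E).
  { intros t. unfold Vu at 1. rewrite seq_S, map_app, fold_right_app. simpl.
    rewrite fr_plus. replace (t - 0)%nat with t by lia. unfold Vu. lra. }
  assert (Hc : forall t i, (i < K)%nat -> V t i <= Vu E zeta imin imax beta lambda t).
  { induction t; intros i Hi; [unfold V, Vu; simpl; lra|].
    rewrite VS, VuS. apply lmax_le; auto. intros e He.
    eapply Rle_trans; [|apply Rplus_le_compat_l; apply (lmax_ge _ _ e He)]. cbv beta.
    set (M := Rmax 0 (Vl E zeta imin beta lambda t)).
    assert (HA := Havg i t M (Vu E zeta imin imax beta lambda t) Hi
       (fun j Hj => conj (Rmax_lub _ _ _ (proj1 (Ha t j Hj)) (HVl t j Hj)) (IHt j Hj))).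
    assert (HA2 := Havg i t 0 beta Hi (Ha t)).
    assert (Hzi := Hz01 i e Hi He). assert (Hzm := Himax_ge i e Hi He).
    set (A := rsum K (fun j => P i j * V t j)) in *.
    assert (0 <= M) by apply Rmax_l. nra. }
  intros i tau Hi Htau. split.
  - apply Rmax_lub; [apply Ha|apply HVl]; auto.
  - apply Rmin_glb; [apply Ha|apply Hc]; auto.
Qed.
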